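(* Let $(G,\sigma)$ be a connection graph and $i\neq j$ vertices, and write the conductance matrix as $\mathcal{C}^\sigma(i,j)=\begin{bmatrix}\mathcal{C}^\sigma_{ii}&\mathcal{C}^\sigma_{ij}\\ \mathcal{C}^\sigma_{ji}&\mathcal{C}^\sigma_{jj}\end{bmatrix}$. Then $$\mathcal{C}^\sigma_{ii}=\deg(i)\big(I_{d\times d}-(1-\mathbb{P}^i[T^1_j<T^1_i])\,\Omega^1_{ii}(j)\big),\qquad \mathcal{C}^\sigma_{ji}=-\deg(j)\,\mathbb{P}^j[T^1_i<T^1_j]\,\Omega^1_{ji}(j),$$ and, using $c_{ij}=\deg(i)\mathbb{P}^i[T^1_j<T^1_i]=\deg(j)\mathbb{P}^j[T^1_i<T^1_j]$, $$\mathcal{C}^\sigma(i,j)=c_{ij}\begin{bmatrix}I&-I\\-I&I\end{bmatrix}+\begin{bmatrix}(\deg(i)-c_{ij})(I-\Omega^1_{ii}(j))& c_{ij}(I-\Omega^1_{ij}(i))\\ c_{ij}(I-\Omega^1_{ji}(j))&(\deg(j)-c_{ij})(I-\Omega^1_{jj}(i))\end{bmatrix},$$ where $I=I_{d\times d}$.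
   Context: A connection graph $(G,\sigma)$: finite connected weighted graph $G=(V,E,W)$, $V=\{1,\dots,n\}$, $w_{xy}>0$ iff $\{x,y\}\in E$, $\deg(x)=\sum_y w_{xy}$, and $\sigma$ mapping oriented edges to $\mathsf{O}(d)$ with $\sigma_{yx}=\sigma_{xy}^{\mathrm T}$. Connection Laplacian $\mathcal{L}$: $nd\times nd$ block matrix with blocks $\deg(x)I_d$ on the diagonal, $-w_{xy}\sigma_{xy}$ for $x\sim y$, $0$ otherwise. For a block matrix $M=\begin{bmatrix}A&B\\C&D\end{bmatrix}$, $M/D=A-BD^\dagger C$ ($\dagger$ = Moore–Penrose inverse). The conductance matrix $\mathcal{C}^\sigma(i,j)\in\mathbb{R}^{2d\times2d}$ is the Schur complement $\mathcal{L}/\mathcal{L}_{\{i,j\}^c,\{i,j\}^c}$, with blocks ordered $i$ then $j$. Classical effective resistance $r_{ij}=(e_i-e_j)^{\mathrm T}L^\dagger(e_i-e_j)$ where $L=D-W$ is the graph Laplacian, and $c_{ij}=1/r_{ij}$. $(X_t)$: simple random walk with transition probabilities $w_{xy}/\deg(x)$; $\mathbb{P}^x$ given $X_0=x$; $T^1_k=\inf\{t\ge1:X_t=k\}$. For $a,b,k\in V$, $\Omega^1_{ab}(k)=\mathbb{E}^a\big[\prod_{\ell=1}^{T^1_b}\sigma_{X_{\ell-1}X_\ell}\mid T^1_b<T^1_k\big]$ (ordered product). *)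

(* Defs.v *)
From HB Require Import structures.
From mathcomp Require Import all_boot all_order all_algebra.
From mathcomp Require Import classical_sets boolp reals topology normedtype sequences.
Set Implicit Arguments. Unset Strict Implicit. Unset Printing Implicit Defensive.
Import Order.TTheory GRing.Theory Num.Theory.
Import numFieldNormedType.Exports.
Local Open Scope ring_scope.

Section ConnGraph.
Variables (R : realType) (N d : nat).
Variables (w : 'M[R]_N) (sigma : 'I_N -> 'I_N -> 'M[R]_d).

Definition deg (x : 'I_N) : R := \sum_(y < N) w x y.

Definition conn_graph : Prop :=
  [/\ (forall x y, w x y = w y x) /\ (forall x y, 0 <= w x y),
      forall x, w x x = 0,
      forall x y, connect [rel a b | 0 < w a b] x y,
      forall x y, 0 < w x y -> sigma x y *m (sigma x y)^T = 1%:M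
    & forall x y, 0 < w x y -> sigma y x = (sigma x y)^T].

Definition Lblk (x y : 'I_N) : 'M[R]_d :=
  if x == y then deg x *: 1%:M else - (w x y *: sigma x y).

Definition penrose m n (A : 'M[R]_(m, n)) (X : 'M[R]_(n, m)) : Prop :=
  [/\ A *m X *m A = A, X *m A *m X = X,
      (A *m X)^T = A *m X & (X *m A)^T = X *m A].

Definition pinv m n (A : 'M[R]_(m, n)) : 'M[R]_(n, m) := xget 0 (penrose A).

Definition schur m k (A : 'M[R]_m) (B : 'M[R]_(m, k)) (C : 'M[R]_(k, m))
  (D : 'M[R]_k) : 'M[R]_m := A - B *m pinv D *m C.

(* ---------- conductance matrix C^sigma(i,j) = L / L_{{i,j}^c,{i,j}^c} ---------- *)
Section Conductance.
Variables (i j : 'I_N).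
Definition compl : {set 'I_N} := [set x | (x != i) && (x != j)].
Definition cv (a : 'I_#|compl|) : 'I_N := enum_val a.

Definition Lcc := \mxblock_(a < #|compl|, b < #|compl|) Lblk (cv a) (cv b).
Definition Lrow (x : 'I_N) := \mxrow_(b < #|compl|) Lblk x (cv b).
Definition Lcol (x : 'I_N) := \mxcol_(a < #|compl|) Lblk (cv a) x.

Definition conductance : 'M[R]_(d + d) :=
  schur (block_mx (Lblk i i) (Lblk i j) (Lblk j i) (Lblk j j))
        (col_mx (Lrow i) (Lrow j)) (row_mx (Lcol i) (Lcol j)) Lcc.
End Conductance.

Definition graphLap : 'M[R]_N :=
  \matrix_(x, y) ((if x == y then deg x else 0) - w x y).
Definition eff_res (i j : 'I_N) : R :=
  let e : 'cV[R]_N := delta_mx i 0 - delta_mx j 0 in (e^T *m pinv graphLap *m e) 0 0.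
Definition eff_cond (i j : 'I_N) : R := (eff_res i j)^-1.

Definition ptrans (x y : 'I_N) : R := w x y / deg x.

(* paths X_0 .. X_s (s >= 1 steps) realising {T^1_b = s < T^1_k} from a *)
Definition hit_path (a b k : 'I_N) (s : nat) (x : {ffun 'I_s.+1 -> 'I_N}) : bool :=
  [&& x ord0 == a, x ord_max == b &
      [forall t : 'I_s.+1, ((0 < t)%N && (t < s)%N) ==> ((x t != b) && (x t != k))]].

Definition path_prob s (x : {ffun 'I_s.+1 -> 'I_N}) : R :=
  \prod_(t < s) ptrans (x (widen_ord (leqnSn s) t)) (x (lift ord0 t)).

Definition path_sig s (x : {ffun 'I_s.+1 -> 'I_N}) : 'M[R]_d :=
  \big[(@mulmx R d d d)/1%:M]_(t < s) sigma (x (widen_ord (leqnSn s) t)) (x (lift ord0 t)).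

(* P^a[T^1_b = s, T^1_b < T^1_k] and E^a[prod sigma ; T^1_b = s < T^1_k] *)
Definition hitP_s a b k (s : nat) : R := \sum_(x : {ffun 'I_s.+1 -> 'I_N} | hit_path a b k x) path_prob x.
Definition hitE_s a b k (s : nat) : 'M[R]_d :=
  \sum_(x : {ffun 'I_s.+1 -> 'I_N} | hit_path a b k x) (path_prob x *: path_sig x).

(* P^a[T^1_b < T^1_k] = sum over s >= 1 *)
Definition hitP (a b k : 'I_N) : R := limn (fun n => \sum_(s < n) hitP_s a b k s.+1).
(* E^a[prod sigma ; T^1_b < T^1_k], entrywise series *)
Definition hitE (a b k : 'I_N) : 'M[R]_d :=
  \matrix_(p, q) limn (fun n => \sum_(s < n) hitE_s a b k s.+1 p q).

(* Omega^1_ab(k) = E^a[prod sigma | T^1_b < T^1_k]  (0 if the event is null) *)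
Definition Omega1 (a b k : 'I_N) : 'M[R]_d := (hitP a b k)^-1 *: hitE a b k.

End ConnGraph.

(* Main.v *)
Require Import Defs.
From HB Require Import structures.
From mathcomp Require Import all_boot all_order all_algebra.
From mathcomp Require Import classical_sets boolp reals topology normedtype sequences.
From mathcomp Require Import ring lra.
Import Order.TTheory GRing.Theory Num.Theory.
Import numFieldNormedType.Exports.
Local Open Scope ring_scope.
Local Open Scope classical_set_scope.
Local Open Scope ring_scope.
Set Implicit Arguments. Unset Strict Implicit. Unset Printing Implicit Defensive.

Section Main.
Variables (R : realType) (N d : nat) (w : 'M[R]_N).
Variable (sigma : 'I_N -> 'I_N -> 'M[R]_d).
Variables (i j : 'I_N).
Hypothesis Hg : conn_graph w sigma.
Hypothesis Hij : i != j.

Local Notation deg := (deg w).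
Local Notation p := (ptrans w).

Lemma wsym x y : w x y = w y x. Proof. by case: Hg => [[ws _] _ _ _ _]. Qed.
Lemma wge0 x y : 0 <= w x y. Proof. by case: Hg => [[_ ws] _ _ _ _]. Qed.
Lemma wxx x : w x x = 0. Proof. by case: Hg => [_ ws _ _ _]. Qed.
Lemma wconn x y : connect [rel a b | 0 < w a b] x y.
Proof. by case: Hg => [_ _ ws _ _]. Qed.
Lemma sorth x y : 0 < w x y -> sigma x y *m (sigma x y)^T = 1%:M.
Proof. by case: Hg => [_ _ _ ws _]; apply: ws. Qed.
Lemma ssym x y : 0 < w x y -> sigma y x = (sigma x y)^T.
Proof. by case: Hg => [_ _ _ _ ws]; apply: ws. Qed.

Lemma deg_ge0 x : 0 <= deg x.
Proof. by apply: sumr_ge0 => y _; exact: wge0. Qed.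

Lemma has_nb x : exists y, 0 < w x y.
Proof.
have [z xz] : exists z, z != x.
  by case: (eqVneq i x) => [<-|]; [exists j; rewrite eq_sym | exists i].
move: (wconn x z) => /connectP [[|y q]] /=.
  by move=> _ zx; rewrite zx eqxx in xz.
by case/andP=> xy _ _; exists y.
Qed.

Lemma deg_gt0 x : 0 < deg x.
Proof.
have [y xy] := has_nb x.
rewrite /deg (bigD1 y) //=; apply: (lt_le_trans xy).
by rewrite lerDl; apply: sumr_ge0 => z _; exact: wge0.
Qed.

Lemma deg_neq0 x : deg x != 0. Proof. by rewrite gt_eqF ?deg_gt0. Qed.

Lemma p_ge0 x y : 0 <= p x y.
Proof. by rewrite /ptrans divr_ge0 ?wge0 ?deg_ge0. Qed.

Lemma p_sum x : \sum_y p x y = 1.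
Proof. by rewrite /ptrans -mulr_suml divff ?deg_neq0. Qed.

Lemma p_xx x : p x x = 0.
Proof. by rewrite /ptrans wxx mul0r. Qed.

Lemma degp x y : deg x * p x y = w x y.
Proof. by rewrite /ptrans mulrC divfK ?deg_neq0. Qed.

Lemma p_gt0 x y : (0 < p x y) = (0 < w x y).
Proof. by rewrite /ptrans pmulr_lgt0 // invr_gt0 deg_gt0. Qed.

Lemma maxprin (S : pred 'I_N) (z : 'I_N) (n : 'I_N -> R) :
  ~~ S z ->
  (forall a, S a -> 0 <= n a) ->
  (forall a, S a -> n a <= \sum_(y | S y) p a y * n y) ->
  forall a, S a -> n a = 0.
Proof.
move=> Sz n0 nsub.
suff: forall a, S a -> n a <= 0.
  by move=> H a Sa; apply/eqP; rewrite eq_le H // n0.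
case: (pickP S) => [a0 Sa0|S0]; last by move=> a; rewrite S0.
have [m Sm mmax] : exists2 m, S m & forall a, S a -> n a <= n m.
  by case: (arg_maxP n Sa0) => m Sm H; exists m.
case: (lerP (n m) 0) => [nm0|nmpos].
  by move=> a Sa; apply: le_trans nm0; apply: mmax.
pose A := [pred a | S a && (n a == n m)].
have key : forall a, a \in A -> forall y, 0 < w a y -> y \in A.
  move=> a /andP [Sa /eqP nam] y way.
  have h1 : n m <= \sum_(y | S y) p a y * n y by rewrite -nam; apply: nsub.
  have h2 : \sum_(y | S y) p a y * n y <= (\sum_(y | S y) p a y) * n m.
    by rewrite mulr_suml; apply: ler_sum => y' Sy'; rewrite ler_wpM2l ?p_ge0 ?mmax.
  have h3 : \sum_(y | S y) p a y <= 1.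
    rewrite -(p_sum a) [X in _ <= X](bigID S) /= lerDl.
    by apply: sumr_ge0 => y' _; apply: p_ge0.
  have h4 : \sum_(y | S y) p a y = 1.
    apply/eqP; rewrite eq_le h3 /=.
    by rewrite -(ler_pM2r nmpos) mul1r (le_trans h1 h2).
  have h5 : \sum_(y | S y) p a y * (n m - n y) = 0.
    apply/eqP; rewrite eq_le; apply/andP; split.
      rewrite (eq_bigr (fun y => p a y * n m - p a y * n y)) => [|y' _]; last by rewrite mulrBr.
      by rewrite sumrB -mulr_suml h4 mul1r subr_le0.
    by apply: sumr_ge0 => y' Sy'; rewrite mulr_ge0 ?p_ge0 // subr_ge0 mmax.
  have Sy : S y.
    apply/negPn/negP => nSy.
    have : \sum_(y | ~~ S y) p a y = 0.
      have : 1 + \sum_(y | ~~ S y) p a y = 1 + 0.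
        by rewrite addr0 -{2}(p_sum a) [in RHS](bigID S) /= h4.
      by move/addrI.
    move/eqP; rewrite psumr_eq0 => [/allP/(_ y)|y' _]; last exact: p_ge0.
    rewrite mem_index_enum nSy /= => /(_ isT)/eqP py0.
    by move: way; rewrite -p_gt0 py0 ltxx.
  move/eqP: h5; rewrite psumr_eq0 => [/allP/(_ y)|y' Sy']; last first.
    by rewrite mulr_ge0 ?p_ge0 // subr_ge0 mmax.
  rewrite mem_index_enum Sy /= => /(_ isT); rewrite mulf_eq0 subr_eq0 => /orP [|/eqP eqn].
    by rewrite gt_eqF // p_gt0.
  by rewrite inE /= Sy -eqn eqxx.
have clA : fingraph.closed [rel a b | 0 < w a b] A.
  move=> x y /= wxy; apply/idP/idP => H; first exact: key H _ wxy.
  by apply: key H _ _; rewrite wsym.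
have := closed_connect clA (wconn m z).
by rewrite inE Sm eqxx inE (negbTE Sz).
Qed.


Definition fcons s (a : 'I_N) (x : {ffun 'I_s.+1 -> 'I_N}) : {ffun 'I_s.+2 -> 'I_N} :=
  [ffun t => if unlift ord0 t is Some t' then x t' else a].
Definition ftail s (x : {ffun 'I_s.+2 -> 'I_N}) : {ffun 'I_s.+1 -> 'I_N} :=
  [ffun t => x (lift ord0 t)].

Lemma fcons0 s a (x : {ffun 'I_s.+1 -> 'I_N}) : fcons a x ord0 = a.
Proof. by rewrite ffunE unlift_none. Qed.
Lemma fconsS s a (x : {ffun 'I_s.+1 -> 'I_N}) t : fcons a x (lift ord0 t) = x t.
Proof. by rewrite ffunE liftK. Qed.
Lemma ftail_fcons s a (x : {ffun 'I_s.+1 -> 'I_N}) : ftail (fcons a x) = x.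
Proof. by apply/ffunP => t; rewrite ffunE fconsS. Qed.
Lemma fcons_ftail s a (x : {ffun 'I_s.+2 -> 'I_N}) : x ord0 = a -> fcons a (ftail x) = x.
Proof.
move=> x0; apply/ffunP => t; case: (unliftP ord0 t) => [t'|] ->.
  by rewrite fconsS ffunE.
by rewrite fcons0.
Qed.

Lemma sum_fcons (V : nmodType) s a (P : pred {ffun 'I_s.+2 -> 'I_N}) (G : _ -> V) :
  (forall x, P x -> x ord0 = a) ->
  \sum_(x | P x) G x = \sum_(x' | P (fcons a x')) G (fcons a x').
Proof.
move=> HP; rewrite (reindex_onto (fcons a) (@ftail s)) => [|x Px]; last exact: fcons_ftail (HP _ Px).
by apply: eq_bigl => x'; rewrite ftail_fcons eqxx andbT.
Qed.

Lemma big_fcons (T : Type) (idx : T) (op : T -> T -> T) (F : 'I_N -> 'I_N -> T) s a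
  (x : {ffun 'I_s.+1 -> 'I_N}) :
  \big[op/idx]_(t < s.+1) F (fcons a x (widen_ord (leqnSn s.+1) t)) (fcons a x (lift ord0 t))
  = op (F a (x ord0)) (\big[op/idx]_(t < s) F (x (widen_ord (leqnSn s) t)) (x (lift ord0 t))).
Proof.
rewrite big_ord_recl.
have -> : widen_ord (leqnSn s.+1) ord0 = ord0 :> 'I_s.+2 by apply: val_inj.
rewrite fcons0 fconsS; congr op; apply: eq_bigr => t _.
have -> : widen_ord (leqnSn s.+1) (lift ord0 t) = lift ord0 (widen_ord (leqnSn s) t).
  by apply: val_inj.
by rewrite !fconsS.
Qed.

Lemma path_prob_fcons s a (x : {ffun 'I_s.+1 -> 'I_N}) :
  path_prob w (fcons a x) = p a (x ord0) * path_prob w x.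
Proof. by rewrite /path_prob big_fcons. Qed.

Lemma path_sig_fcons s a (x : {ffun 'I_s.+1 -> 'I_N}) :
  path_sig sigma (fcons a x) = sigma a (x ord0) *m path_sig sigma x.
Proof. by rewrite /path_sig big_fcons. Qed.

Lemma forall_recl s (Q : pred 'I_s.+2) :
  [forall t, Q t] = Q ord0 && [forall t : 'I_s.+1, Q (lift ord0 t)].
Proof.
apply/forallP/andP => [H|[H0 /forallP H] t]; first by split=> //; apply/forallP.
by case: (unliftP ord0 t) => [t'|] ->.
Qed.

Lemma hit_path_fcons0 a b k (x : {ffun 'I_1 -> 'I_N}) :
  hit_path a b k (fcons a x) = (x ord0 == b).
Proof.
rewrite /hit_path fcons0 eqxx /=.
have -> : ord_max = lift ord0 (ord0 : 'I_1) :> 'I_2 by apply: val_inj.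
rewrite fconsS; case: (x ord0 == b) => //=.
by apply/forallP => t; apply/implyP => /andP [] /[swap]; rewrite ltnS leqn0 => /eqP ->.
Qed.

Lemma hit_path_fconsS s a b k (x : {ffun 'I_s.+2 -> 'I_N}) :
  hit_path a b k (fcons a x) =
  [&& x ord0 != b, x ord0 != k & hit_path (x ord0) b k x].
Proof.
rewrite /hit_path fcons0 eqxx /=.
have -> : ord_max = lift ord0 (ord_max : 'I_s.+2) :> 'I_s.+3 by apply: val_inj.
rewrite fconsS eqxx /= forall_recl /= [X in _ && X]forall_recl /=.
rewrite !fconsS [in RHS]forall_recl /=.
have E : [forall t : 'I_s.+1, (bump 0 (bump 0 t) < s.+2)%N ==>
           (fcons a x (lift ord0 (lift ord0 t)) != b) && (fcons a x (lift ord0 (lift ord0 t)) != k)]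
  = [forall t : 'I_s.+1, (bump 0 t < s.+1)%N ==> (x (lift ord0 t) != b) && (x (lift ord0 t) != k)].
  by apply: eq_forallb => t; rewrite !fconsS.
rewrite E.
by case: (x ord_max == b); case: (x ord0 != b); case: (x ord0 != k).
Qed.

Lemma hit_path0 a b k s (x : {ffun 'I_s.+1 -> 'I_N}) : hit_path a b k x -> x ord0 = a.
Proof. by case/and3P => /eqP. Qed.

Lemma sum_hit_S (V : nmodType) a b k s (G : 'I_N -> {ffun 'I_s.+2 -> 'I_N} -> V) :
  \sum_(x | hit_path a b k (fcons a x)) G (x ord0) x =
  \sum_(y | (y != b) && (y != k)) \sum_(x | hit_path y b k x) G y x.
Proof.
under eq_bigl do rewrite hit_path_fconsS.
rewrite (partition_big (fun x : {ffun 'I_s.+2 -> 'I_N} => x ord0) (fun y => (y != b) && (y != k))); last first.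
  by move=> x /and3P [-> ->].
apply: eq_bigr => y /andP [yb yk]; apply: eq_big => [x|x /andP [_ /eqP ->]] //.
apply/idP/idP => [/andP [/and3P [_ _ H] /eqP e]|H]; first by rewrite -e.
by rewrite (hit_path0 H) yb yk H eqxx.
Qed.

Lemma sum_hit_1 (V : nmodType) a b k (G : 'I_N -> V) :
  \sum_(x : {ffun 'I_1 -> 'I_N} | hit_path a b k (fcons a x)) G (x ord0) = G b.
Proof.
under eq_bigl do rewrite hit_path_fcons0.
rewrite (big_pred1 [ffun => b]) => [|x]; first by rewrite ffunE.
apply/eqP/eqP => [H|->]; last by rewrite ffunE.
by apply/ffunP => t; rewrite ord1 ffunE.
Qed.

Lemma hitP_s1 a b k : hitP_s w a b k 1 = p a b.
Proof.
rewrite /hitP_s (@sum_fcons _ _ a); last by move=> x; exact: hit_path0.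
under eq_bigr do rewrite path_prob_fcons /path_prob big_ord0 mulr1.
exact: (sum_hit_1 _ _ _ (fun y => p a y)).
Qed.

Lemma hitP_sS a b k s : hitP_s w a b k s.+2 =
  \sum_(y | (y != b) && (y != k)) p a y * hitP_s w y b k s.+1.
Proof.
rewrite /hitP_s (@sum_fcons _ _ a); last by move=> x; exact: hit_path0.
under eq_bigr do rewrite path_prob_fcons.
rewrite (sum_hit_S _ _ _ (fun y x => p a y * path_prob w x)).
by apply: eq_bigr => y _; rewrite mulr_sumr.
Qed.

Lemma hitE_s1 a b k : hitE_s w sigma a b k 1 = p a b *: sigma a b.
Proof.
rewrite /hitE_s (@sum_fcons _ _ a); last by move=> x; exact: hit_path0.
under eq_bigr do rewrite path_prob_fcons path_sig_fcons /path_prob /path_sig !big_ord0 mulr1 mulmx1.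
exact: (sum_hit_1 _ _ _ (fun y => p a y *: sigma a y)).
Qed.

Lemma hitE_sS a b k s : hitE_s w sigma a b k s.+2 =
  \sum_(y | (y != b) && (y != k)) p a y *: (sigma a y *m hitE_s w sigma y b k s.+1).
Proof.
rewrite /hitE_s (@sum_fcons _ _ a); last by move=> x; exact: hit_path0.
under eq_bigr do rewrite path_prob_fcons path_sig_fcons.
rewrite (sum_hit_S _ _ _ (fun y x => (p a y * path_prob w x) *: (sigma a y *m path_sig sigma x))).
apply: eq_bigr => y _; rewrite mulmx_sumr scaler_sumr; apply: eq_bigr => x _.
by rewrite -scalerA scalemxAr.
Qed.

Definition uP a b k n := \sum_(s < n) hitP_s w a b k s.+1.
Definition uE a b k n := \sum_(s < n) hitE_s w sigma a b k s.+1.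

Lemma hitP_s_ge0 a b k s : 0 <= hitP_s w a b k s.
Proof. by apply: sumr_ge0 => x _; apply: prodr_ge0 => t _; exact: p_ge0. Qed.

Lemma uP_ge0 a b k n : 0 <= uP a b k n.
Proof. by apply: sumr_ge0 => s _; exact: hitP_s_ge0. Qed.

Lemma uP_S a b k n : uP a b k n.+1 =
  p a b + \sum_(y | (y != b) && (y != k)) p a y * uP y b k n.
Proof.
rewrite /uP big_ord_recl hitP_s1; congr (_ + _).
under eq_bigr do rewrite /= hitP_sS.
rewrite exchange_big /=; apply: eq_bigr => y _; by rewrite mulr_sumr.
Qed.

Lemma uE_S a b k n : uE a b k n.+1 =
  p a b *: sigma a b + \sum_(y | (y != b) && (y != k)) p a y *: (sigma a y *m uE y b k n).
Proof.
rewrite /uE big_ord_recl hitE_s1; congr (_ + _).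
under eq_bigr do rewrite /= hitE_sS.
rewrite exchange_big /=; apply: eq_bigr => y _; by rewrite mulmx_sumr scaler_sumr.
Qed.

Lemma uP_le1 b k n a : uP a b k n <= 1.
Proof.
elim: n a => [|n IH] a; first by rewrite /uP big_ord0 ler01.
rewrite uP_S -(p_sum a) [X in _ <= X](bigD1 b) //= lerD2l.
apply: (@le_trans _ _ (\sum_(y | (y != b) && (y != k)) p a y)).
  by apply: ler_sum => y _; rewrite ler_piMr ?p_ge0 ?IH.
rewrite [X in _ <= X](bigID (fun y => y != k)) /= lerDl.
by apply: sumr_ge0 => y _; exact: p_ge0.
Qed.

Lemma uP_incr a b k : {homo uP a b k : n m / (n <= m)%N >-> n <= m}.
Proof.
move=> n m /subnK <-; elim: (m - n)%N => [|t IH] //=.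
rewrite addSn; apply: le_trans IH _.
by rewrite /uP big_ord_recr /= lerDl hitP_s_ge0.
Qed.

Lemma cvg_uP a b k : cvgn (uP a b k).
Proof.
apply: nondecreasing_is_cvgn; first exact: uP_incr.
by exists 1 => _ [n _ <-]; exact: uP_le1.
Qed.

Lemma cvg_bigsum (I : Type) (r : seq I) (P : pred I) (f : I -> nat -> R) (l : I -> R) :
  (forall y, P y -> f y n @[n --> \oo] --> l y) ->
  (\sum_(y <- r | P y) f y n) @[n --> \oo] --> \sum_(y <- r | P y) l y.
Proof.
elim: r => [|y r IH] H.
  under eq_fun do rewrite big_nil. rewrite big_nil; exact: cvg_cst.
under eq_fun do rewrite big_cons. rewrite big_cons.
case Py: (P y); last exact: IH.
by apply: cvgD; [exact: H|exact: IH].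
Qed.

Lemma hitP_harm a b k : hitP w a b k =
  p a b + \sum_(y | (y != b) && (y != k)) p a y * hitP w y b k.
Proof.
rewrite /hitP -/(uP a b k).
apply: cvg_lim => //; rewrite -cvg_shiftS /=.
under eq_fun do rewrite uP_S.
apply: cvgD; first exact: cvg_cst.
apply: cvg_bigsum => y _; apply: cvgMr; exact: cvg_uP.
Qed.

Definition orthm (M : 'M[R]_d) := M *m M^T == 1%:M.

Lemma orthm_entry M : orthm M -> forall r q, `|M r q| <= 1.
Proof.
move=> /eqP H r q.
have : (M *m M^T) r r = 1 by rewrite H mxE eqxx.
rewrite mxE (bigD1 q) //= mxE => E.
have : M r q * M r q <= 1.
  rewrite -E lerDl; apply: sumr_ge0 => t _; rewrite mxE -expr2; exact: sqr_ge0.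
by move=> h; rewrite ler_norml; apply/andP; split; nra.
Qed.

Lemma path_sig_orth s (x : {ffun 'I_s.+1 -> 'I_N}) :
  path_prob w x != 0 -> orthm (path_sig sigma x).
Proof.
rewrite /path_prob prodf_seq_neq0 => /allP H.
rewrite /path_sig; apply: (big_ind orthm).
- by rewrite /orthm trmx1 mulmx1.
- move=> A B /eqP HA /eqP HB; rewrite /orthm trmx_mul mulmxA -(mulmxA A) HB mulmx1 HA //.
- move=> t _; have := H t (mem_index_enum _) => /= pt.
  apply/eqP/sorth; rewrite -p_gt0 lt_def pt; exact: p_ge0.
Qed.

Lemma hitE_s_bound a b k s r q : `|hitE_s w sigma a b k s r q| <= hitP_s w a b k s.
Proof.
rewrite /hitE_s summxE; apply: le_trans (ler_norm_sum _ _ _) _.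
apply: ler_sum => x _; rewrite mxE normrM.
have pp0 : 0 <= path_prob w x by apply: prodr_ge0 => t _; exact: p_ge0.
rewrite ger0_norm //; case: (eqVneq (path_prob w x) 0) => [->|nz]; first by rewrite mul0r.
by rewrite ler_piMr // orthm_entry // path_sig_orth.
Qed.

Lemma seriesE (u : nat -> R) : (fun n => \sum_(s < n) u s) = series u.
Proof. by apply: funext => n; rewrite /series /= big_mkord. Qed.

Lemma cvg_uE a b k r q : cvgn (fun n => \sum_(s < n) hitE_s w sigma a b k s.+1 r q).
Proof.
rewrite (seriesE (fun s => hitE_s w sigma a b k s.+1 r q)).
apply: normed_cvg.
apply: (@series_le_cvg _ _ (fun s => hitP_s w a b k s.+1)).
- by move=> n; exact: normr_ge0.
- by move=> n; exact: hitP_s_ge0.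
- by move=> n; exact: hitE_s_bound.
- rewrite -(seriesE (fun s => hitP_s w a b k s.+1)); exact: cvg_uP.
Qed.

Lemma uE_entry a b k n r q : uE a b k n r q = \sum_(s < n) hitE_s w sigma a b k s.+1 r q.
Proof. by rewrite /uE summxE. Qed.

Lemma hitE_entry a b k r q : hitE w sigma a b k r q =
  limn (fun n => \sum_(s < n) hitE_s w sigma a b k s.+1 r q).
Proof. by rewrite mxE. Qed.

Lemma lim_eq_shift (u v : nat -> R) l : (forall n, u n.+1 = v n) ->
  v n @[n --> \oo] --> l -> limn u = l.
Proof.
move=> E H; apply: cvg_lim => //; rewrite -cvg_shiftS.
suff -> : (fun n => u n.+1) = v by [].
by apply: funext => n; exact: E.
Qed.

Lemma hitE_harm a b k : hitE w sigma a b k =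
  p a b *: sigma a b + \sum_(y | (y != b) && (y != k)) p a y *: (sigma a y *m hitE w sigma y b k).
Proof.
apply/matrixP => r q; rewrite [LHS]mxE !mxE. rewrite summxE.
under [in RHS]eq_bigr => y _. rewrite mxE [X in _ * X]mxE. over.
under [in RHS]eq_bigr do under eq_bigr do rewrite hitE_entry.
apply: (@lim_eq_shift _ (fun n => p a b * sigma a b r q + \sum_(y | (y != b) && (y != k))
   p a y * \sum_t sigma a y r t * uE y b k n t q)).
  move=> n; rewrite -uE_entry uE_S mxE [X in X + _]mxE summxE; congr (_ + _); apply: eq_bigr => y _.
  by rewrite mxE [X in _ * X]mxE.
apply: cvgD; first exact: cvg_cst.
apply: cvg_bigsum => y _; apply: cvgMr.
apply: cvg_bigsum => t _; apply: cvgMr.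
under eq_fun do rewrite uE_entry.
exact: cvg_uE.
Qed.

Lemma hitP0 a b k : hitP w a b k = 0 -> hitE w sigma a b k = 0.
Proof.
move=> H0.
have hs : forall s, hitP_s w a b k s.+1 = 0.
  move=> s; apply/eqP; rewrite eq_le hitP_s_ge0 andbT.
  have := nondecreasing_cvgn_le (@uP_incr a b k) (@cvg_uP a b k) s.+1.
  rewrite -/(hitP w a b k) H0 /uP big_ord_recr /= => h.
  apply: le_trans h; rewrite lerDr; apply: sumr_ge0 => t _; exact: hitP_s_ge0.
apply/matrixP => r q; rewrite !mxE.
have -> : (fun n => \sum_(s < n) hitE_s w sigma a b k s.+1 r q) = (fun _ => 0).
  apply: funext => n; apply: big1 => s _; apply/eqP; rewrite -normr_le0 -(hs s).
  exact: hitE_s_bound.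
exact: lim_cst.
Qed.

Lemma hitPOmega a b k : hitP w a b k *: Omega1 w sigma a b k = hitE w sigma a b k.
Proof.
rewrite /Omega1; case: (eqVneq (hitP w a b k) 0) => [H|H].
  by rewrite H scale0r hitP0.
by rewrite scalerA divff // scale1r.
Qed.

Definition Sij : pred 'I_N := fun y => (y != i) && (y != j).

Lemma p_split a : 1 = p a i + p a j + \sum_(y | Sij y) p a y.
Proof.
rewrite /Sij -(p_sum a) (bigD1 i) //= (bigD1 j) //= 1?eq_sym // addrA.
congr (_ + _).
Qed.

Lemma hitP_harm_ij a : hitP w a i j = p a i + \sum_(y | Sij y) p a y * hitP w y i j.
Proof. exact: hitP_harm. Qed.

Lemma hitP_harm_ji a : hitP w a j i = p a j + \sum_(y | Sij y) p a y * hitP w y j i.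
Proof. by rewrite hitP_harm; congr (_ + _); apply: eq_bigl => y; rewrite /Sij andbC. Qed.

Lemma hit_sum a : hitP w a i j + hitP w a j i = 1.
Proof.
pose g a := 1 - hitP w a i j - hitP w a j i.
have Hg' : forall a, g a = \sum_(y | Sij y) p a y * g y.
  move=> b; rewrite /g.
  under eq_bigr do rewrite !mulrBr mulr1.
  rewrite !sumrB hitP_harm_ij hitP_harm_ji {1}(p_split b).
  set s1 := \sum_(y | Sij y) p b y; set s2 := \sum_(y | Sij y) _; set s3 := \sum_(y | Sij y) _.
  lra.
have g0 : forall a, Sij a -> g a = 0.
  move=> b Sb; apply/normr0_eq0.
  apply: (@maxprin Sij i (fun a => `|g a|) _ _ _ b Sb).
  - by rewrite /Sij eqxx.
  - by move=> c _ /=; exact: normr_ge0.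
  - move=> c _ /=; rewrite Hg'; apply: le_trans (ler_norm_sum _ _ _) _.
    by apply: ler_sum => y _; rewrite normrM ger0_norm ?p_ge0.
have : g a = 0.
  rewrite Hg'; apply: big1 => y Sy; by rewrite g0 // mulr0.
rewrite /g; lra.
Qed.

Local Notation L := (graphLap w).

Lemma N_gt0 : (0 < N)%N. Proof. exact: (leq_ltn_trans (leq0n _) (ltn_ord i)). Qed.

Lemma L_entry x y : L x y = (if x == y then deg x else 0) - w x y.
Proof. by rewrite mxE. Qed.

Lemma trL : L^T = L.
Proof.
apply/matrixP => x y; rewrite !mxE; case: (eqVneq x y) => [->|ne] //.
by rewrite wsym.
Qed.

Lemma L_rowsum x : \sum_y L x y = 0.
Proof.
under eq_bigr do rewrite L_entry.
rewrite sumrB (bigD1 x) //= eqxx big1 ?addr0 ?subrr // => y; rewrite eq_sym => /negbTE -> //.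
Qed.

Lemma L_colsum y : \sum_x L x y = 0.
Proof.
apply: etrans (L_rowsum y); apply: eq_bigr => x _.
by rewrite -[in LHS]trL mxE.
Qed.

Lemma Lx_entry (x : 'cV[R]_N) a : (L *m x) a 0 = deg a * (x a 0 - \sum_y p a y * x y 0).
Proof.
rewrite mxE; under eq_bigr do rewrite L_entry mulrBl.
rewrite sumrB mulrBr mulr_sumr; congr (_ - _).
  rewrite (bigD1 a) //= eqxx big1 ?addr0 // => y; rewrite eq_sym => /negbTE ->; exact: mul0r.
by apply: eq_bigr => y _; rewrite mulrA degp.
Qed.

Lemma sum_Lx (x : 'cV[R]_N) : \sum_a (L *m x) a 0 = 0.
Proof.
under eq_bigr do rewrite mxE.
rewrite exchange_big /=; apply: big1 => y _.
by rewrite -mulr_suml L_colsum mul0r.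
Qed.

Lemma Lker (x : 'cV[R]_N) : L *m x = 0 -> forall a, x a 0 = x i 0.
Proof.
move=> H.
have E : forall a, x a 0 - x i 0 = \sum_(y | y != i) p a y * (x y 0 - x i 0).
  move=> a.
  have := Lx_entry x a; rewrite H mxE => /esym/eqP; rewrite mulf_eq0 (negbTE (deg_neq0 a)) /=.
  rewrite subr_eq0 => /eqP ->.
  have -> : \sum_(y | y != i) p a y * (x y 0 - x i 0) = \sum_y p a y * (x y 0 - x i 0).
    rewrite [in RHS](bigID (fun y => y != i)) /= [X in _ = _ + X]big1 ?addr0 //.
    by move=> y /negPn /eqP ->; rewrite subrr mulr0.
  under [RHS]eq_bigr do rewrite mulrBr.
  by rewrite sumrB -mulr_suml p_sum mul1r.
move=> a; apply/eqP; rewrite -subr_eq0; apply/eqP.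
case: (eqVneq a i) => [->|ai]; first by rewrite subrr.
apply/normr0_eq0.
apply: (@maxprin (fun y => y != i) i (fun a => `|x a 0 - x i 0|) _ _ _ a ai).
- by rewrite /= eqxx.
- by move=> c _ /=; exact: normr_ge0.
- move=> c _ /=; rewrite E; apply: le_trans (ler_norm_sum _ _ _) _.
  by apply: ler_sum => y _; rewrite normrM ger0_norm ?p_ge0.
Qed.

Definition Jm : 'M[R]_N := const_mx (N%:R^-1).

Lemma N_neq0 : (N%:R : R) != 0.
Proof. by rewrite pnatr_eq0 -lt0n N_gt0. Qed.

Lemma LJ : L *m Jm = 0.
Proof.
apply/matrixP => x y; rewrite mxE [RHS]mxE.
under eq_bigr do rewrite [Jm _ _]mxE.
by rewrite -mulr_suml L_rowsum mul0r.
Qed.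

Lemma JL : Jm *m L = 0.
Proof.
apply/matrixP => x y; rewrite mxE [RHS]mxE.
under eq_bigr do rewrite [Jm _ _]mxE.
by rewrite -mulr_sumr L_colsum mulr0.
Qed.

Lemma JJ : Jm *m Jm = Jm.
Proof.
apply/matrixP => x y; rewrite !mxE.
under eq_bigr do rewrite !mxE.
by rewrite sumr_const card_ord; move: N_neq0 => hN; field.
Qed.

Lemma trJ : Jm^T = Jm.
Proof. by apply/matrixP => x y; rewrite !mxE. Qed.

Definition Mm := L + Jm.

Lemma trM : Mm^T = Mm.
Proof. by rewrite /Mm linearD /= trL trJ. Qed.

Lemma Mm_unit : Mm \in unitmx.
Proof.
rewrite -row_free_unit; apply: inj_row_free => v Hv.
pose x := v^T.
have Hx : Mm *m x = 0 by rewrite -trM -trmx_mul Hv trmx0.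
have sx : \sum_a x a 0 = 0.
  have : \sum_a (Mm *m x) a 0 = 0 by rewrite Hx; apply: big1 => a _; rewrite mxE.
  rewrite /Mm mulmxDl.
  under eq_bigr do rewrite mxE.
  rewrite big_split /= sum_Lx add0r.
  under eq_bigr do rewrite mxE.
  under eq_bigr do under eq_bigr do rewrite mxE.
  rewrite sumr_const card_ord -mulr_sumr.
  set s0 := \sum_(a < N) x a 0; move: N_neq0 => hN H.
  have : N%:R^-1 * s0 *+ N = s0 by field.
  by rewrite H => <-.
have Jx : Jm *m x = 0.
  apply/matrixP => a b; rewrite !mxE; under eq_bigr do rewrite mxE.
  by rewrite -mulr_sumr ord1 sx mulr0.
have Lx : L *m x = 0 by move: Hx; rewrite /Mm mulmxDl Jx addr0.
have xi : x i 0 = 0.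
  move: sx; under eq_bigr do rewrite (Lker Lx).
  rewrite sumr_const card_ord -mulr_natr => /eqP; rewrite mulf_eq0 (negbTE N_neq0) orbF.
  by move/eqP.
have : x = 0.
  by apply/matrixP => a b; rewrite ord1 (Lker Lx) xi mxE.
by move/(congr1 trmx); rewrite trmxK trmx0.
Qed.

Definition Xm := invmx Mm - Jm.

Lemma MJ : Mm *m Jm = Jm. Proof. by rewrite /Mm mulmxDl LJ JJ add0r. Qed.
Lemma JM : Jm *m Mm = Jm. Proof. by rewrite /Mm mulmxDr JL JJ add0r. Qed.
Lemma iMJ : invmx Mm *m Jm = Jm.
Proof. by rewrite -{1}MJ mulmxA mulVmx ?Mm_unit // mul1mx. Qed.
Lemma JiM : Jm *m invmx Mm = Jm.
Proof. by rewrite -{1}JM -mulmxA mulmxV ?Mm_unit // mulmx1. Qed.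

Lemma LX : L *m Xm = 1%:M - Jm.
Proof.
have -> : L = Mm - Jm by rewrite /Mm addrK.
by rewrite /Xm mulmxBl !mulmxBr mulmxV ?Mm_unit // JiM MJ JJ subrr subr0.
Qed.

Lemma XL : Xm *m L = 1%:M - Jm.
Proof.
have -> : L = Mm - Jm by rewrite /Mm addrK.
by rewrite /Xm mulmxBl !mulmxBr mulVmx ?Mm_unit // iMJ JM JJ subrr subr0.
Qed.

Lemma penroseL : penrose L Xm.
Proof.
split.
- by rewrite LX mulmxBl mul1mx JL subr0.
- by rewrite XL mulmxBl mul1mx /Xm mulmxBr JiM JJ subrr subr0.
- by rewrite LX linearB /= trmx1 trJ.
- by rewrite XL linearB /= trmx1 trJ.
Qed.

Lemma penrose_pinvL : penrose L (pinv L).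
Proof. by apply: xgetPex; exists Xm; exact: penroseL. Qed.

Definition hv : 'cV[R]_N := \col_a (if a == i then 1 else if a == j then 0 else hitP w a i j).
Definition c1 := deg i * hitP w i j i.
Definition ev : 'cV[R]_N := delta_mx i 0 - delta_mx j 0.

Lemma hv_i : hv i 0 = 1. Proof. by rewrite mxE eqxx. Qed.
Lemma hv_j : hv j 0 = 0. Proof. by rewrite mxE eqxx eq_sym (negbTE Hij). Qed.
Lemma hv_S a : Sij a -> hv a 0 = hitP w a i j.
Proof. by case/andP => /negbTE ai /negbTE aj; rewrite mxE ai aj. Qed.

Lemma sum_p_h a : \sum_y p a y * hv y 0 = hitP w a i j.
Proof.
rewrite hitP_harm_ij (bigD1 i) //= (bigD1 j) 1?eq_sym //= hv_i hv_j mulr1 mulr0 add0r.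
congr (_ + _); apply: eq_big => [y //|y Sy]; by rewrite hv_S.
Qed.

Lemma Lh_entry a : (L *m hv) a 0 = deg a * (hv a 0 - hitP w a i j).
Proof. by rewrite Lx_entry sum_p_h. Qed.

Lemma c12 : c1 = deg j * hitP w j i j.
Proof.
have := sum_Lx hv.
under eq_bigr do rewrite Lh_entry.
rewrite (bigD1 i) //= (bigD1 j) 1?eq_sym //= big1 => [|y Sy]; last by rewrite hv_S ?subrr ?mulr0.
rewrite hv_i hv_j addr0 /c1 -(hit_sum i).
move: (hitP w i i j) (hitP w i j i) (hitP w j i j) => x1 x2 x3 H. lra.
Qed.

Lemma ev_entry a : ev a 0 = (a == i)%:R - (a == j)%:R.
Proof. by rewrite !mxE !eqxx !andbT. Qed.

Lemma Lh : L *m hv = c1 *: ev.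
Proof.
apply/matrixP => a b; rewrite ord1 Lh_entry [RHS]mxE ev_entry.
case: (eqVneq a i) => [->|ai].
  rewrite hv_i (negbTE Hij) /c1 -{1}(hit_sum i) /=; ring.
case: (eqVneq a j) => [->|aj].
  rewrite hv_j c12 /=; ring.
rewrite hv_S /Sij ?ai ?aj // /=; ring.
Qed.

Lemma c1_neq0 : c1 != 0.
Proof.
apply/eqP => c0.
have : L *m hv = 0 by rewrite Lh c0 scale0r.
move/Lker/(_ j); rewrite hv_i hv_j => /eqP; by rewrite eq_sym oner_eq0.
Qed.

Lemma eff_cond_eq : eff_cond w i j = c1.
Proof.
rewrite /eff_cond /eff_res -/L -/ev.
have ee : ev = c1^-1 *: (L *m hv) by rewrite Lh scalerA mulVf ?c1_neq0 // scale1r.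
have [LYL _ _ _] := penrose_pinvL.
rewrite ee.
have -> : (c1^-1 *: (L *m hv))^T = c1^-1 *: (hv^T *m L).
  have -> : (c1^-1 *: (L *m hv))^T = c1^-1 *: (L *m hv)^T.
    by apply/matrixP => a b; rewrite !mxE.
  by rewrite trmx_mul trL.
have -> : (c1^-1 *: (hv^T *m L)) *m pinv L *m (c1^-1 *: (L *m hv)) =
          (c1^-1 * c1^-1) *: (hv^T *m (L *m pinv L *m L) *m hv).
  by rewrite -scalemxAl -scalemxAl -scalemxAr scalerA !mulmxA.
rewrite LYL -mulmxA Lh -scalemxAr mxE [X in _ * X]mxE [(hv^T *m ev) _ _]mxE.
have -> : \sum_a hv^T 0 a * ev a 0 = 1.
  under eq_bigr do rewrite [hv^T _ _]mxE ev_entry.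
  rewrite (bigD1 i) //= (bigD1 j) 1?eq_sym //= big1 => [|y /andP [yi yj]].
    by rewrite hv_i hv_j !mul0r add0r addr0 mul1r eqxx eq_sym (negbTE Hij) subr0.
  by rewrite (negbTE yi) (negbTE yj) /= subrr mulr0.
by rewrite mulr1 -mulrA mulVf ?c1_neq0 // mulr1 invrK.
Qed.

Definition ip (u v : 'rV[R]_d) : R := (u *m v^T) 0 0.

Lemma ipE u v : ip u v = \sum_k u 0 k * v 0 k.
Proof. by rewrite /ip mxE; apply: eq_bigr => k _; rewrite mxE. Qed.

Lemma ip_ge0 u : 0 <= ip u u.
Proof. by rewrite ipE; apply: sumr_ge0 => k _; rewrite -expr2 sqr_ge0. Qed.

Lemma ip0 u : ip u u = 0 -> u = 0.
Proof.
rewrite ipE => /eqP; rewrite psumr_eq0 => [/allP H|k _]; last by rewrite -expr2 sqr_ge0.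
apply/matrixP => a k; rewrite ord1 mxE.
by have := H k (mem_index_enum _) => /=; rewrite mulf_eq0 orbb => /eqP.
Qed.

Lemma ip_am u v : 2 * ip u v <= ip u u + ip v v.
Proof.
have : 0 <= \sum_k (u 0 k - v 0 k) * (u 0 k - v 0 k).
  by apply: sumr_ge0 => k _; rewrite -expr2 sqr_ge0.
have -> : \sum_k (u 0 k - v 0 k) * (u 0 k - v 0 k) =
   \sum_k u 0 k * u 0 k + \sum_k v 0 k * v 0 k - 2 * \sum_k u 0 k * v 0 k.
  rewrite mulr_sumr -big_split -sumrB /=; apply: eq_bigr => k _; ring.
by rewrite !ipE; lra.
Qed.

Lemma ip_orth u (s : 'M[R]_d) : s *m s^T = 1%:M -> ip (u *m s) (u *m s) = ip u u.
Proof. by move=> H; rewrite /ip trmx_mul mulmxA -(mulmxA u) H mulmx1. Qed.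

Lemma ip_sumZl (I : finType) (P : pred I) (c : I -> R) (u : I -> 'rV[R]_d) v :
  ip (\sum_(y | P y) c y *: u y) v = \sum_(y | P y) c y * ip (u y) v.
Proof.
rewrite /ip mulmx_suml summxE; apply: eq_bigr => y _.
by rewrite -scalemxAl mxE.
Qed.

Local Notation m := #|compl i j|.
Local Notation cv := (@cv N i j).
Local Notation Lb := (Lblk w sigma).

Lemma cvS a : Sij (cv a).
Proof. by have := enum_valP a; rewrite /cv inE. Qed.

Lemma sum_cv (V : nmodType) (F : 'I_N -> V) :
  \sum_(a < m) F (cv a) = \sum_(y | Sij y) F y.
Proof. by rewrite -big_enum_val; apply: eq_bigl => y; rewrite inE. Qed.

Lemma cv_inj : injective cv.
Proof. exact: enum_val_inj. Qed.

Lemma cv_onto x : Sij x -> exists b, cv b = x.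
Proof.
move=> Sx; have xA : x \in compl i j by rewrite inE.
by exists (enum_rank_in xA x); rewrite /cv enum_rankK_in.
Qed.

Lemma Lblk_eq x y : Lb x y = deg x *: ((x == y)%:R *: 1%:M - p x y *: sigma x y).
Proof.
rewrite /Lblk; case: (eqVneq x y) => [->|ne].
  by rewrite p_xx scale0r subr0 scale1r.
by rewrite scale0r sub0r scalerN scalerA degp.
Qed.

Lemma sumLb (V : 'I_N -> 'rV[R]_d) x : Sij x ->
  \sum_(y | Sij y) V y *m Lb y x =
  deg x *: (V x - \sum_(y | Sij y) p x y *: (V y *m sigma y x)).
Proof.
move=> Sx.
under eq_bigr do rewrite Lblk_eq -scalemxAr mulmxBr -!scalemxAr mulmx1 scalerBr.
rewrite sumrB scalerBr scaler_sumr; congr (_ - _).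
  rewrite (bigD1 x) //= eqxx scale1r big1 ?addr0 // => y /andP [_ /negbTE ->].
  by rewrite scale0r scaler0.
apply: eq_bigr => y _; rewrite !scalerA; congr (_ *: _).
by rewrite degp wsym -degp.
Qed.

Lemma Lcc_unit : Lcc w sigma i j \in unitmx.
Proof.
rewrite -row_free_unit; apply: inj_row_free => v Hv.
pose vb := fun a : 'I_m => submxrow v a.
pose V := fun y => \sum_(a | cv a == y) vb a.
have VE : forall b, V (cv b) = vb b.
  by move=> b; rewrite /V (big_pred1 b) // => a; rewrite (inj_eq cv_inj).
have Hb : forall b, \sum_a vb a *m Lb (cv a) (cv b) = 0.
  move=> b; have := congr1 (fun M => submxrow M b) Hv.
  by rewrite /= -{1}(submxrowK v) /Lcc mul_mxrow_mxblock mxrowK submxrow0.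
have Hx : forall x, Sij x -> V x = \sum_(y | Sij y) p x y *: (V y *m sigma y x).
  move=> x Sx; have [b <-] := cv_onto Sx.
  have := Hb b; under eq_bigr do rewrite -VE.
  rewrite (sum_cv (fun y => V y *m Lb y (cv b))) sumLb ?cvS //.
  move/(congr1 (fun M => (deg (cv b))^-1 *: M)).
  rewrite scalerA mulVf ?deg_neq0 // scale1r scaler0 => /eqP; rewrite subr_eq0 => /eqP //.
have nvsub : forall x, Sij x -> ip (V x) (V x) <= \sum_(y | Sij y) p x y * ip (V y) (V y).
  move=> x Sx.
  have h1 : ip (V x) (V x) = \sum_(y | Sij y) p x y * ip (V y *m sigma y x) (V x).
    by rewrite {1}(Hx x Sx) ip_sumZl.
  have h2 : 2 * ip (V x) (V x) <= \sum_(y | Sij y) p x y * ip (V y) (V y)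
                                  + (\sum_(y | Sij y) p x y) * ip (V x) (V x).
    rewrite {1}h1 mulr_sumr mulr_suml -big_split /=; apply: ler_sum => y Sy.
    case: (eqVneq (p x y) 0) => [->|pn0]; first by rewrite !mul0r mulr0 addr0.
    have wyx : 0 < w y x by rewrite wsym -p_gt0 lt_def pn0 p_ge0.
    have := ip_am (V y *m sigma y x) (V x); rewrite ip_orth ?sorth // => h.
    rewrite mulrA (mulrC 2) -mulrA -mulrDr; apply: ler_wpM2l; [exact: p_ge0|exact: h].
  have h3 : \sum_(y | Sij y) p x y <= 1.
    rewrite -(p_sum x) [X in _ <= X](bigID Sij) /= lerDl.
    by apply: sumr_ge0 => y _; exact: p_ge0.
  have h4 := ip_ge0 (V x).
  have h5 : (\sum_(y | Sij y) p x y) * ip (V x) (V x) <= ip (V x) (V x).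
    by rewrite ler_piMl.
  lra.
have V0 : forall x, Sij x -> V x = 0.
  move=> x Sx; apply: ip0.
  apply: (@maxprin Sij i (fun x => ip (V x) (V x)) _ _ _ x Sx).
  - by rewrite /Sij eqxx.
  - by move=> c _ /=; exact: ip_ge0.
  - by move=> c Sc /=; exact: nvsub.
rewrite -(submxrowK v) -[RHS](mxrow0 (q_ := fun _ : 'I_m => d)).
by apply/eq_mxrowP => b; rewrite -/(vb b) -VE V0 ?cvS.
Qed.

Lemma pinv_inv n (A : 'M[R]_n) : A \in unitmx -> pinv A = invmx A.
Proof.
move=> uA.
have [AXA _ _ _] : penrose A (pinv A).
  apply: xgetPex; exists (invmx A); split.
  - by rewrite mulmxV // mul1mx.
  - by rewrite mulVmx // mul1mx.
  - by rewrite mulmxV // trmx1.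
  - by rewrite mulVmx // trmx1.
have E : invmx A *m (A *m pinv A *m A) *m invmx A = invmx A.
  by rewrite AXA mulVmx // mul1mx.
rewrite -E !mulmxA mulVmx // mul1mx -!mulmxA mulmxV // mulmx1 //.
Qed.

Definition pairij x x' := ((x == i) && (x' == j)) || ((x == j) && (x' == i)).

Lemma harmS x x' : pairij x x' -> forall a, hitE w sigma a x x' =
  p a x *: sigma a x + \sum_(y | Sij y) p a y *: (sigma a y *m hitE w sigma y x x').
Proof.
move=> Hxx a; rewrite hitE_harm; congr (_ + _); apply: eq_bigl => y.
by case/orP: Hxx => /andP [/eqP -> /eqP ->] //; rewrite /Sij andbC.
Qed.

Lemma sumLbr (F : 'I_N -> 'M[R]_d) u :
  \sum_(y | Sij y) Lb u y *m F y =
  deg u *: ((Sij u)%:R *: F u - \sum_(y | Sij y) p u y *: (sigma u y *m F y)).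
Proof.
under eq_bigr do rewrite Lblk_eq -scalemxAl mulmxBl -!scalemxAl mul1mx scalerBr.
rewrite sumrB scalerBr scaler_sumr; congr (_ - _).
case Su: (Sij u).
  rewrite (bigD1 u) //= eqxx scale1r big1 ?addr0 // => y /andP [_ ne].
  by rewrite eq_sym (negbTE ne) scale0r scaler0.
rewrite scale0r scaler0 big1 // => y Sy.
have -> : (u == y) = false by apply/negbTE/eqP => uy; rewrite uy Sy in Su.
by rewrite scale0r scaler0.
Qed.

Definition Zm x x' := \mxcol_(a < m) (- hitE w sigma (cv a) x x').

Lemma LccZ x x' : pairij x x' -> Lcc w sigma i j *m Zm x x' = Lcol w sigma i j x.
Proof.
move=> Hxx; rewrite /Lcc /Zm /Lcol mul_mxblock_mxrow; apply/eq_mxcolP => b.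
rewrite (sum_cv (fun y => Lb (cv b) y *m - hitE w sigma y x x')).
under eq_bigr do rewrite mulmxN.
rewrite sumrN sumLbr cvS /= scale1r (harmS Hxx (cv b)) addrK.
have cx : cv b != x.
  by have := cvS b; case/orP: Hxx => /andP [/eqP -> _]; case/andP.
by rewrite /Lblk (negbTE cx) scalerA degp.
Qed.

Lemma pinvLcol x x' : pairij x x' ->
  pinv (Lcc w sigma i j) *m Lcol w sigma i j x = Zm x x'.
Proof.
by move=> H; rewrite pinv_inv ?Lcc_unit // -(LccZ H) mulKmx // Lcc_unit.
Qed.

Lemma LrowZ y x x' : pairij x x' -> ~~ Sij y ->
  Lrow w sigma i j y *m Zm x x' = deg y *: (hitE w sigma y x x' - p y x *: sigma y x).
Proof.
move=> Hxx Sy; rewrite /Lrow /Zm mul_mxrow_mxcol.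
rewrite (sum_cv (fun u => Lb y u *m - hitE w sigma u x x')).
under eq_bigr do rewrite mulmxN.
rewrite sumrN sumLbr (negbTE Sy) scale0r sub0r scalerN opprK.
by rewrite (harmS Hxx y) addrC addKr.
Qed.

Lemma cond_block y x x' : pairij x x' -> ~~ Sij y ->
  Lb y x - Lrow w sigma i j y *m Zm x x' =
  deg y *: ((y == x)%:R *: 1%:M - hitE w sigma y x x').
Proof.
move=> Hxx Sy; rewrite LrowZ // Lblk_eq -scalerBr; congr (_ *: _).
by rewrite opprB addrA subrK.
Qed.

Lemma conductanceE : conductance w sigma i j =
  block_mx (deg i *: (1%:M - hitE w sigma i i j)) (- (deg i *: hitE w sigma i j i))
           (- (deg j *: hitE w sigma j i j)) (deg j *: (1%:M - hitE w sigma j j i)).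
Proof.
have pij : pairij i j by rewrite /pairij !eqxx.
have pji : pairij j i by rewrite /pairij !eqxx orbT.
have Si : ~~ Sij i by rewrite /Sij eqxx.
have Sj : ~~ Sij j by rewrite /Sij eqxx andbF.
rewrite /conductance /schur -mulmxA mul_mx_row (pinvLcol pij) (pinvLcol pji) mul_col_row.
rewrite opp_block_mx add_block_mx !cond_block // eqxx (negbTE Hij) eq_sym (negbTE Hij).
by rewrite eqxx /= scale1r scale0r !sub0r !scalerN.
Qed.

Lemma main_sec :
  let C := conductance w sigma i j in
  let c := eff_cond w i j in
  let I := (1%:M : 'M[R]_d) in
  [/\ ulsubmx C = deg i *: (I - (1 - hitP w i j i) *: Omega1 w sigma i i j),
      dlsubmx C = - ((deg j * hitP w j i j) *: Omega1 w sigma j i j)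
    & C = c *: block_mx I (- I) (- I) I
          + block_mx ((deg i - c) *: (I - Omega1 w sigma i i j))
                     (c *: (I - Omega1 w sigma i j i))
                     (c *: (I - Omega1 w sigma j i j))
                     ((deg j - c) *: (I - Omega1 w sigma j j i))].
Proof.
have h1 : hitP w i i j = 1 - hitP w i j i by rewrite -(hit_sum i) addrK.
have h2 : hitP w j j i = 1 - hitP w j i j by rewrite -(hit_sum j) addrC addKr.
rewrite /= conductanceE eff_cond_eq -!hitPOmega h1 h2.
split.
- by rewrite block_mxKul.
- by rewrite block_mxKdl scalerA.
rewrite scale_block_mx add_block_mx.
have c2 := c12.
move: (Omega1 w sigma i i j) (Omega1 w sigma i j i) (Omega1 w sigma j i j) (Omega1 w sigma j j i) => O1 O2 O3 O4.
rewrite /c1 in c2 *.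
congr block_mx; apply/matrixP => r q; rewrite !mxE.
- ring.
- ring.
- rewrite c2; ring.
- rewrite c2; ring.
Qed.

End Main.

Unset Implicit Arguments.
Local Open Scope ring_scope.

Theorem theorem5p9 (R : realType) (N d : nat) (w : 'M[R]_N)
  (sigma : 'I_N -> 'I_N -> 'M[R]_d) (i j : 'I_N) :
  conn_graph w sigma -> i != j ->
  let C := conductance w sigma i j in
  let c := eff_cond w i j in
  let I := (1%:M : 'M[R]_d) in
  [/\ ulsubmx C = deg w i *: (I - (1 - hitP w i j i) *: Omega1 w sigma i i j),
      dlsubmx C = - ((deg w j * hitP w j i j) *: Omega1 w sigma j i j)
    & C = c *: block_mx I (- I) (- I) I
          + block_mx ((deg w i - c) *: (I - Omega1 w sigma i i j))
                     (c *: (I - Omega1 w sigma i j i))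
                     (c *: (I - Omega1 w sigma j i j))
                     ((deg w j - c) *: (I - Omega1 w sigma j j i))].
Proof. by move=> Hg Hij; exact: main_sec. Qed.
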